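(* Let $0<a<b$ and $v_0\in(a,2a)$. For $\mu\in(v_0,2a]$ define $$\chi_s(\mu)=-\frac{2\sqrt{\mathcal G_s(\mu)-\mathcal G_s(v_0)}}{R_s(v_0)}+2\int_{v_0}^{\mu}\frac{\sqrt{\mathcal G_s(\mu)-\mathcal G_s(\xi)}}{R_s(\xi)^2}\,R_s'(\xi)\,d\xi .$$ Then $\mathcal G_s'(\xi)>0$ on $(a,2a)$, $\chi_s$ is well defined and positive on $(v_0,2a]$, and $\chi_s$ is strictly increasing on $(v_0,2a]$, so that its maximum on this interval is attained at $\mu=2a$.
   Context: $R_s(\xi)=\xi-a-b$, $g(\xi)=(2a-\xi)/\xi^3$, and $\mathcal G_s(\xi)=-\dfrac{a(a+b)}{\xi^2}+\dfrac{3a+b}{\xi}+\log\xi$, so that $\mathcal G_s'(\xi)=-R_s(\xi)g(\xi)=\dfrac{2a(a+b)}{\xi^3}-\dfrac{3a+b}{\xi^2}+\dfrac1\xi$. *)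

(* Defs.v *)
From Stdlib Require Import Reals Lra.
From Coquelicot Require Import Coquelicot.
Open Scope R_scope.

Definition Rs (a b xi : R) : R := xi - a - b.

Definition Gs (a b xi : R) : R :=
  - (a * (a + b)) / xi ^ 2 + (3 * a + b) / xi + ln xi.

Definition chi_integrand (a b mu xi : R) : R :=
  sqrt (Gs a b mu - Gs a b xi) / (Rs a b xi) ^ 2 * Derive (Rs a b) xi.

Definition chi_s (a b v0 mu : R) : R :=
  - (2 * sqrt (Gs a b mu - Gs a b v0)) / Rs a b v0
  + 2 * RInt (chi_integrand a b mu) v0 mu.

(* Main.v *)
Require Import Defs.
From Stdlib Require Import Reals Lra Psatz FunctionalExtensionality.
From Coquelicot Require Import Coquelicot.
Open Scope R_scope.

Definition dG (a b x : R) := (a + b - x) * (2 * a - x) / x ^ 3.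

Lemma G_der a b x : 0 < x -> is_derive (Gs a b) x (dG a b x).
Proof.
intros Hx. unfold Gs, dG. auto_derive.
- repeat split; try nra; lra.
- field. lra.
Qed.

Lemma Rs_der a b x : Derive (Rs a b) x = 1.
Proof. apply is_derive_unique. unfold Rs. auto_derive; auto; ring. Qed.

Lemma Rs_ex a b x : ex_derive (Rs a b) x.
Proof. unfold Rs. auto_derive. auto. Qed.

Lemma G_cont a b x : 0 < x -> continuous (Gs a b) x.
Proof. intros Hx. exact (ex_derive_continuous (Gs a b) x (ex_intro _ _ (G_der a b x Hx))). Qed.

Lemma Gle a b x y : 0 < a -> a < b -> a < x -> x <= y -> y <= 2 * a -> Gs a b x <= Gs a b y.
Proof.
intros Ha Hab Hx Hxy Hy.
destruct (MVT_gen (Gs a b) x y (dG a b)) as [c [Hc Heq]].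
- intros z Hz. apply G_der. rewrite Rmin_left in Hz; lra.
- intros z Hz. apply continuity_pt_filterlim. apply G_cont. rewrite Rmin_left in Hz; lra.
- rewrite Rmin_left in Hc by lra. rewrite Rmax_right in Hc by lra.
  assert (0 <= dG a b c).
  { unfold dG. apply Rmult_le_pos. apply Rmult_le_pos; lra.
    left. apply Rinv_0_lt_compat. apply pow_lt. lra. }
  assert (0 <= dG a b c * (y - x)) by (apply Rmult_le_pos; lra). lra.
Qed.

Lemma Glt a b x y : 0 < a -> a < b -> a < x -> x < y -> y <= 2 * a -> Gs a b x < Gs a b y.
Proof.
intros Ha Hab Hx Hxy Hy.
set (w := (x + y) / 2).
assert (Gs a b x < Gs a b w).
{ apply (incr_function (Gs a b) a (2*a) (dG a b)); simpl; unfold w; try lra.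
  - intros z H1 H2. apply G_der. lra.
  - intros z H1 H2. unfold dG. apply Rdiv_lt_0_compat.
    apply Rmult_lt_0_compat; lra. apply pow_lt; lra. }
assert (Gs a b w <= Gs a b y) by (apply Gle; unfold w; lra). lra.
Qed.

Lemma chi_int_eq a b mu : chi_integrand a b mu = fun x => sqrt (Gs a b mu - Gs a b x) / Rs a b x ^ 2.
Proof. apply functional_extensionality; intros x. unfold chi_integrand. rewrite Rs_der. ring. Qed.

Lemma integ_cont a b mu x : 0 < x -> Rs a b x <> 0 ->
  continuous (fun y => sqrt (Gs a b mu - Gs a b y) / Rs a b y ^ 2) x.
Proof.
intros Hx Hr.
apply (continuous_mult (K:=R_AbsRing) (fun y => sqrt (Gs a b mu - Gs a b y)) (fun y => / (Rs a b y ^ 2))).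
- apply (continuous_comp (fun y => Gs a b mu - Gs a b y) sqrt).
  + apply (continuous_minus (V:=R_NormedModule) (fun _ => Gs a b mu) (Gs a b)).
    apply continuous_const. apply G_cont; auto.
  + apply continuous_sqrt.
- apply (ex_derive_continuous (fun y => / (Rs a b y ^ 2))).
  unfold Rs in *. auto_derive. rewrite Rmult_1_r. apply Rmult_integral_contrapositive; split; lra.
Qed.

Lemma integ_ex a b mu c d : 0 < a -> a < b -> a < c -> c <= d -> d <= 2 * a ->
  ex_RInt (chi_integrand a b mu) c d.
Proof.
intros Ha Hab Hc Hcd Hd. rewrite chi_int_eq.
apply (ex_RInt_continuous (V:=R_CompleteNormedModule)). intros z Hz.
rewrite Rmin_left in Hz by lra. rewrite Rmax_right in Hz by lra.
apply integ_cont. lra. unfold Rs. lra.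
Qed.


Lemma integ_nonneg a b mu x : Rs a b x <> 0 -> 0 <= chi_integrand a b mu x.
Proof.
intros H. rewrite chi_int_eq. apply Rmult_le_pos. apply sqrt_pos.
left. apply Rinv_0_lt_compat. apply pow2_gt_0. auto.
Qed.

Lemma integ_mono a b m1 m2 x : 0 < a -> a < b -> a < x -> x <= m1 -> m1 <= m2 -> m2 <= 2 * a ->
  chi_integrand a b m1 x <= chi_integrand a b m2 x.
Proof.
intros. rewrite !chi_int_eq. unfold Rdiv. apply Rmult_le_compat_r.
left. apply Rinv_0_lt_compat. apply pow2_gt_0. unfold Rs; lra.
apply sqrt_le_1_alt. assert (Gs a b m1 <= Gs a b m2) by (apply Gle; lra). lra.
Qed.

Theorem mainTheorem4 (a b v0 : R) :
  0 < a -> a < b -> a < v0 < 2 * a ->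
  (* G_s' > 0 on (a, 2a) *)
  (forall xi, a < xi < 2 * a -> ex_derive (Gs a b) xi /\ Derive (Gs a b) xi > 0) /\
  (* chi_s well defined and positive on (v0, 2a] *)
  (forall mu, v0 < mu <= 2 * a ->
     0 <= Gs a b mu - Gs a b v0 /\
     Rs a b v0 <> 0 /\
     (forall xi, v0 <= xi <= mu ->
        0 <= Gs a b mu - Gs a b xi /\ Rs a b xi <> 0 /\ ex_derive (Rs a b) xi) /\
     ex_RInt (chi_integrand a b mu) v0 mu /\
     0 < chi_s a b v0 mu) /\
  (* chi_s strictly increasing on (v0, 2a] *)
  (forall mu1 mu2, v0 < mu1 -> mu1 < mu2 -> mu2 <= 2 * a ->
     chi_s a b v0 mu1 < chi_s a b v0 mu2) /\
  (* hence its maximum on (v0, 2a] is attained at 2a *)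
  (forall mu, v0 < mu <= 2 * a -> chi_s a b v0 mu <= chi_s a b v0 (2 * a)).
Proof.
intros Ha Hab Hv.
assert (Hr0 : Rs a b v0 < 0) by (unfold Rs; lra).
set (k := / - Rs a b v0).
assert (Hk : 0 < k) by (unfold k; apply Rinv_0_lt_compat; lra).
assert (Hfirst : forall mu, - (2 * sqrt (Gs a b mu - Gs a b v0)) / Rs a b v0
          = 2 * sqrt (Gs a b mu - Gs a b v0) * k).
{ intros mu. unfold k. field. lra. }
assert (Hpos : forall mu, v0 < mu <= 2 * a -> 0 < chi_s a b v0 mu).
{ intros mu Hm. unfold chi_s. rewrite Hfirst.
  assert (0 < sqrt (Gs a b mu - Gs a b v0)).
  { apply sqrt_lt_R0. assert (Gs a b v0 < Gs a b mu) by (apply Glt; lra). lra. }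
  assert (0 <= RInt (chi_integrand a b mu) v0 mu).
  { apply RInt_ge_0. lra. apply integ_ex; lra.
    intros x Hx. apply integ_nonneg. unfold Rs; lra. }
  assert (0 < sqrt (Gs a b mu - Gs a b v0) * k) by (apply Rmult_lt_0_compat; auto).
  lra. }
assert (Hinc : forall mu1 mu2, v0 < mu1 -> mu1 < mu2 -> mu2 <= 2 * a ->
     chi_s a b v0 mu1 < chi_s a b v0 mu2).
{ intros m1 m2 H1 H2 H3. unfold chi_s. rewrite !Hfirst.
  assert (sqrt (Gs a b m1 - Gs a b v0) < sqrt (Gs a b m2 - Gs a b v0)).
  { apply sqrt_lt_1_alt. assert (Gs a b v0 < Gs a b m1) by (apply Glt; lra).
    assert (Gs a b m1 < Gs a b m2) by (apply Glt; lra). lra. }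
  assert (sqrt (Gs a b m1 - Gs a b v0) * k < sqrt (Gs a b m2 - Gs a b v0) * k)
    by (apply Rmult_lt_compat_r; auto).
  rewrite <- (RInt_Chasles (chi_integrand a b m2) v0 m1 m2)
    by (apply integ_ex; lra).
  assert (RInt (chi_integrand a b m1) v0 m1 <= RInt (chi_integrand a b m2) v0 m1).
  { apply RInt_le. lra. apply integ_ex; lra. apply integ_ex; lra.
    intros x Hx. apply integ_mono; lra. }
  assert (0 <= RInt (chi_integrand a b m2) m1 m2).
  { apply RInt_ge_0. lra. apply integ_ex; lra.
    intros x Hx. apply integ_nonneg. unfold Rs; lra. }
  unfold plus; simpl. lra. }
split; [|split; [|split]].
- intros xi Hxi. split. eexists. apply G_der. lra.
  rewrite (is_derive_unique _ _ _ (G_der a b xi ltac:(lra))).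
  unfold dG. apply Rdiv_lt_0_compat. apply Rmult_lt_0_compat; lra. apply pow_lt; lra.
- intros mu Hm. split; [|split; [|split; [|split]]].
  + assert (Gs a b v0 <= Gs a b mu) by (apply Gle; lra). lra.
  + lra.
  + intros xi Hxi. split; [|split].
    * assert (Gs a b xi <= Gs a b mu) by (apply Gle; lra). lra.
    * unfold Rs; lra.
    * apply Rs_ex.
  + apply integ_ex; lra.
  + apply Hpos; auto.
- exact Hinc.
- intros mu Hm. destruct (Req_dec mu (2 * a)) as [->|Hne]. lra.
  left. apply Hinc; lra.
Qed.
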